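(* Let $\Theta\subseteq\mathbb{R}^d$ be a $C^3$ hypersurface for which there exists $\varepsilon_0>0$ such that every $x\in\mathbb{R}^d$ with $d(x,\Theta)<\varepsilon_0$ has a unique point $p\in\Theta$ with $\|x-p\|=d(x,\Theta)$. Then for all $x,y\in\mathbb{R}^d$ and $\eta>0$ there exists a continuous curve $\gamma$ from $x$ to $y$ with $\ell(\gamma)<\|x-y\|+\eta$ such that $\gamma$ intersects $\Theta$ in only finitely many points.
   Context: A hypersurface is a $(d-1)$-dimensional submanifold of $\mathbb{R}^d$. $d(x,\Theta)=\inf_{y\in\Theta}\|x-y\|$. Length of a continuous curve $\gamma:[0,1]\to\mathbb{R}^d$: $\ell(\gamma)=\sup\sum_k\|\gamma(t_k)-\gamma(t_{k-1})\|$ over partitions of $[0,1]$. *)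

(* Defs.v *)
From HB Require Import structures.
From mathcomp Require Import all_boot all_order all_algebra.
From mathcomp Require Import all_classical all_reals all_analysis.
Set Implicit Arguments. Unset Strict Implicit. Unset Printing Implicit Defensive.
Import Order.TTheory GRing.Theory Num.Theory.
Import numFieldNormedType.Exports.
Local Open Scope classical_set_scope.
Local Open Scope ring_scope.

(* Euclidean norm on R^d (the library's norm on matrices is the max norm). *)
Definition eucl_norm {R : realType} {d : nat} (x : 'rV[R]_d) : R :=
  Num.sqrt (\sum_(i < d) x ord0 i ^+ 2).

(* d(x, A) = inf_{y in A} ||x - y||, in the extended reals (= +oo if A empty) *)
Definition dist_to {R : realType} {d : nat} (x : 'rV[R]_d) (A : set 'rV[R]_d) : \bar R :=
  ereal_inf [set (eucl_norm (x - y))%:E | y in A].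

Fixpoint isCk {R : realType} {d : nat} (k : nat) (f : 'rV[R]_d -> R) : Prop :=
  match k with
  | 0%N => continuous f
  | k'.+1 => (forall x, differentiable f x) /\
             (forall v : 'rV[R]_d, isCk k' (fun x => 'D_v f x))
  end.

Definition Ck_hypersurface {R : realType} {d : nat} (k : nat) (A : set 'rV[R]_d) : Prop :=
  forall p, A p ->
    exists (U : set 'rV[R]_d) (f : 'rV[R]_d -> R),
      [/\ open U, U p, isCk k f, (exists v : 'rV[R]_d, 'D_v f p != 0) &
          A `&` U = [set x | U x /\ f x = 0]].

Definition curve_length {R : realType} {d : nat} (g : R -> 'rV[R]_d) : \bar R :=
  ereal_sup [set l | exists (n : nat) (t : nat -> R),
     [/\ t 0%N = 0, t n = 1, (forall k, (k < n)%N -> t k <= t k.+1) &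
         l = (\sum_(k < n) eucl_norm (g (t k.+1) - g (t k)))%:E]].

(* Main.v *)
Require Import Defs.
From HB Require Import structures.
From mathcomp Require Import all_boot all_order all_algebra.
From mathcomp Require Import all_classical all_reals all_analysis.
From mathcomp Require Import ring lra.
Import Order.TTheory GRing.Theory Num.Theory.
Import numFieldNormedType.Exports.
Local Open Scope classical_set_scope.
Local Open Scope ring_scope.

Section Eucl.
Variables (R : realType) (d : nat).
Implicit Types x y : 'rV[R]_d.

Local Notation en := (@eucl_norm R d).

Lemma sumsq_ge0 x : 0 <= \sum_(i < d) x ord0 i ^+ 2.
Proof. by apply: sumr_ge0 => i _; rewrite sqr_ge0. Qed.

Lemma en_ge0 x : 0 <= en x.
Proof. exact: sqrtr_ge0. Qed.

Lemma en_sq x : en x ^+ 2 = \sum_(i < d) x ord0 i ^+ 2.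
Proof. by rewrite /eucl_norm sqr_sqrtr // sumsq_ge0. Qed.

Lemma en_scale (c : R) x : en (c *: x) = `|c| * en x.
Proof.
rewrite /eucl_norm.
under eq_bigr do rewrite mxE exprMn.
by rewrite -mulr_sumr sqrtrM ?sqr_ge0 // sqrtr_sqr.
Qed.

Lemma en_entry x i : `|x ord0 i| <= en x.
Proof.
rewrite /eucl_norm -sqrtr_sqr ler_sqrt ?sumsq_ge0 //.
rewrite (bigD1 i) //= lerDl.
by apply: sumr_ge0 => j _; rewrite sqr_ge0.
Qed.

Lemma norm_le_en x : `|x| <= en x.
Proof.
rewrite -[`|x|]/(mx_norm x) mx_normrE.
apply/bigmax_leP; split; first exact: en_ge0.
move=> [i j] _ /=.
by rewrite (ord1 i); apply: en_entry.
Qed.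

Lemma en0_eq x : en x = 0 -> x = 0.
Proof.
move=> h; apply/eqP; rewrite -normr_eq0 eq_le normr_ge0 andbT.
by rewrite -h norm_le_en.
Qed.

Lemma cauchy_schwarz x y :
  \sum_(i < d) x ord0 i * y ord0 i <= en x * en y.
Proof.
set S := \sum_(i < d) _.
have hA := en_sq x; have hB := en_sq y.
have key : 0 <= 2 * (en x * en y) * (en x * en y - S).
  have : 0 <= \sum_(i < d) (en y * x ord0 i - en x * y ord0 i) ^+ 2.
    by apply: sumr_ge0 => i _; rewrite sqr_ge0.
  have -> : \sum_(i < d) (en y * x ord0 i - en x * y ord0 i) ^+ 2 =
    en y ^+ 2 * (\sum_(i < d) x ord0 i ^+ 2) + en x ^+ 2 * (\sum_(i < d) y ord0 i ^+ 2)
    - 2 * (en x * en y) * S.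
    rewrite /S !mulr_sumr -big_split -sumrB /=.
    by apply: eq_bigr => i _; ring.
  rewrite -hA -hB.
  by move=> h; rewrite (_ : 2 * (en x * en y) * (en x * en y - S) =
     en y ^+ 2 * en x ^+ 2 + en x ^+ 2 * en y ^+ 2 - 2 * (en x * en y) * S) //; ring.
have [p0|] := ltrP 0 (en x * en y).
  by move: key; rewrite pmulr_rge0 ?subr_ge0 // mulr_gt0.
rewrite le_eqVlt ltNge mulr_ge0 ?en_ge0 // orbF => /eqP h.
rewrite h.
have : en x = 0 \/ en y = 0.
  by move/eqP: h; rewrite mulf_eq0 => /orP[] /eqP; [left|right].
case=> h0; rewrite /S big1 // => i _.
- have := en_entry x i; rewrite h0 normr_le0 => /eqP ->; by rewrite mul0r.
- have := en_entry y i; rewrite h0 normr_le0 => /eqP ->; by rewrite mulr0.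
Qed.

Lemma en_triangle x y : en (x + y) <= en x + en y.
Proof.
rewrite -(ger0_norm (addr_ge0 (en_ge0 x) (en_ge0 y))) -sqrtr_sqr.
rewrite /eucl_norm ler_sqrt ?sqr_ge0 //.
have -> : \sum_(i < d) (x + y) ord0 i ^+ 2 =
  \sum_(i < d) x ord0 i ^+ 2 + \sum_(i < d) y ord0 i ^+ 2 +
  2 * \sum_(i < d) x ord0 i * y ord0 i.
  rewrite mulr_sumr -!big_split /=; apply: eq_bigr => i _; rewrite mxE; ring.
rewrite -/(en x) -/(en y) -en_sq -en_sq.
have := cauchy_schwarz x y; rewrite -/(en x) -/(en y) => h.
have : (en x + en y) ^+ 2 = en x ^+ 2 + en y ^+ 2 + 2 * (en x * en y) by ring.
move=> ->; lra.
Qed.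

Lemma en_sub_sym x y : en (x - y) = en (y - x).
Proof. by rewrite -opprB -scaleN1r en_scale normrN normr1 mul1r. Qed.

End Eucl.
Arguments sumsq_ge0 {R d}. Arguments en_ge0 {R d}. Arguments en_sq {R d}.
Arguments en_scale {R d}. Arguments en_entry {R d}. Arguments norm_le_en {R d}.
Arguments en0_eq {R d}. Arguments cauchy_schwarz {R d}. Arguments en_triangle {R d}.
Arguments en_sub_sym {R d}.
Section Good.
Variables (R : realType) (d : nat) (Th : set 'rV[R]_d).
Local Notation en := (@eucl_norm R d).

Definition good (a b : 'rV[R]_d) (L : R) :=
  0 < L /\ exists g : R -> 'rV[R]_d,
    [/\ g 0 = a, g 1 = b,
        (forall s t, s <= t -> en (g t - g s) <= L * (t - s)) &
        finite_set ([set g t | t in `[0, 1]] `&` Th)].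

Lemma good_mono a b L L' : good a b L -> L <= L' -> good a b L'.
Proof.
move=> [L0 [g [g0 g1 gl gf]]] LL; split; first exact: lt_le_trans LL.
exists g; split => // s t st; apply: le_trans (gl _ _ st) _.
by apply: ler_wpM2r => //; rewrite subr_ge0.
Qed.

Lemma atmost1_finite (T : Type) (A : set T) :
  (forall z1 z2, A z1 -> A z2 -> z1 = z2) -> finite_set A.
Proof.
move=> h; case: (pselect (exists z, A z)) => [[z0 Az0]|nA].
  apply: (sub_finite_set _ (finite_set1 z0)) => z Az; exact: h.
apply: (sub_finite_set _ (finite_set0 T)) => z Az; apply: nA; by exists z.
Qed.

Lemma good_seg a b L : 0 < L -> en (b - a) <= L ->
  (forall z1 z2, ([set a + t *: (b - a) | t in `[0, 1]] `&` Th) z1 ->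
                 ([set a + t *: (b - a) | t in `[0, 1]] `&` Th) z2 -> z1 = z2) ->
  good a b L.
Proof.
move=> L0 hL h; split => //; exists (fun t => a + t *: (b - a)); split.
- by rewrite scale0r addr0.
- by rewrite scale1r addrC subrK.
- move=> s t st; rewrite opprD addrACA subrr add0r -scalerBl en_scale ger0_norm ?subr_ge0 //.
  by rewrite mulrC; apply: ler_wpM2r => //; rewrite subr_ge0.
- exact: atmost1_finite.
Qed.

Lemma good_refl a L : 0 < L -> good a a L.
Proof.
move=> L0; apply: good_seg => //.
  have := @en_scale R d 0 0; rewrite scale0r normr0 mul0r subrr => ->.
  exact: ltW.
by move=> z1 z2 [[t _ <-] _] [[s _ <-] _]; rewrite subrr !scaler0.
Qed.

Lemma good_cat a b c L1 L2 : good a b L1 -> good b c L2 -> good a c (L1 + L2).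
Proof.
move=> [L10 [g1 [g10 g11 g1l g1f]]] [L20 [g2 [g20 g21 g2l g2f]]].
have LL : 0 < L1 + L2 by rewrite addr_gt0.
set l := L1 / (L1 + L2).
have l0 : 0 < l by rewrite divr_gt0.
have l1 : l < 1 by rewrite ltr_pdivrMr // mul1r ltrDl.
have l1' : 0 < 1 - l by rewrite subr_gt0.
have E1 : L1 / l = L1 + L2 by rewrite /l invf_div mulrA mulrC mulrA mulVf ?mul1r ?gt_eqF.
have E2 : L2 / (1 - l) = L1 + L2.
  have -> : 1 - l = L2 / (L1 + L2) by rewrite /l; field; rewrite gt_eqF.
  by rewrite invf_div mulrA mulrC mulrA mulVf ?mul1r ?gt_eqF.
split => //.
exists (fun t => if t <= l then g1 (t / l) else g2 ((t - l) / (1 - l))); split.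
- by rewrite ltW // mul0r.
- by rewrite leNgt l1 /= divff ?gt_eqF.
- move=> s t st.
  case: (lerP s l) => sl; case: (lerP t l) => tl.
  + apply: le_trans (g1l _ _ _) _; first by rewrite ler_pM2r ?invr_gt0.
    by rewrite -mulrBl mulrA -E1 mulrAC.
  + have -> : g2 ((t - l) / (1 - l)) - g1 (s / l) =
      (g2 ((t - l) / (1 - l)) - g2 0) + (g1 1 - g1 (s / l)).
      by rewrite g20 -g11 addrA subrK.
    apply: le_trans (en_triangle _ _) _.
    apply: le_trans (lerD (g2l _ _ _) (g1l _ _ _)) _.
    * by rewrite divr_ge0 ?subr_ge0 ?ltW.
    * by rewrite ler_pdivrMr // mul1r.
    * have -> : L2 * ((t - l) / (1 - l) - 0) = (L2 / (1 - l)) * (t - l).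
        by rewrite subr0 mulrA mulrAC.
      have -> : L1 * (1 - s / l) = (L1 / l) * (l - s).
        by field; rewrite gt_eqF.
      by rewrite E1 E2 -mulrDr addrC addrA subrK.
  + by move: (lt_le_trans sl (le_trans st tl)); rewrite ltxx.
  + apply: le_trans (g2l _ _ _) _.
      by rewrite ler_pM2r ?invr_gt0 // lerD2r.
    by rewrite -mulrBl opprB addrA subrK mulrA -E2 mulrAC.
- have fU : finite_set (([set g1 t | t in `[0, 1]] `&` Th) `|` ([set g2 t | t in `[0, 1]] `&` Th)).
    by rewrite finite_setU.
  apply: (sub_finite_set _ fU).
  move=> z [[t t01 <-]].
  move: t01; rewrite /= in_itv /= => /andP[t0 t1].
  case: (lerP t l) => tl Thz.
  + left; split => //; exists (t / l) => //.
    by rewrite /= in_itv /= divr_ge0 ?(ltW l0) //= ler_pdivrMr // mul1r.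
  + right; split => //; exists ((t - l) / (1 - l)) => //.
    rewrite /= in_itv /= divr_ge0 ?subr_ge0 ?(ltW tl) ?(ltW l1') ?(ltW l1) //=.
    by rewrite ler_pdivrMr // mul1r lerD2r.
Qed.

Lemma good_curve a b L : good a b L ->
  exists g : R -> 'rV[R]_d,
    [/\ {within `[0, 1], continuous g}, g 0 = a, g 1 = b,
        (curve_length g <= L%:E)%E &
        finite_set ([set g t | t in `[0, 1]] `&` Th)].
Proof.
move=> [L0 [g [g0 g1 gl gf]]].
have gla s t : en (g t - g s) <= L * `|t - s|.
  case: (lerP s t) => st.
    by apply: gl.
  rewrite en_sub_sym; apply: gl; exact: ltW.
exists g; split => //.
- apply: continuous_subspaceT => t.
  apply/cvgrPdist_lt => e e0.
  have : \forall s \near t, `|t - s| < e / L.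
    exact: (@cvgr_dist_lt _ R^o _ (nbhs t) _ (fun s => s) t cvg_id _ (divr_gt0 e0 L0)).
  apply: filterS => s hs.
  apply: le_lt_trans (norm_le_en _) _.
  apply: le_lt_trans (gla _ _) _.
  by rewrite mulrC -ltr_pdivlMr.
- apply: ge_ereal_sup => _ [n [t [t0 tn tmono ->]]].
  rewrite lee_fin.
  apply: le_trans (_ : \sum_(k < n) L * (t k.+1 - t k) <= L) .
    by apply: ler_sum => k _; apply: gl; apply: tmono.
  rewrite -mulr_sumr -(big_mkord xpredT (fun k => t k.+1 - t k)) telescope_sumr //.
  by rewrite tn t0 subr0 mulr1.
Qed.

End Good.
Arguments good {R d} Th a b L.
Arguments good_mono {R d Th a b L L'}.
Arguments good_seg {R d Th a b L}.
Arguments good_refl {R d Th a L}.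
Arguments good_cat {R d Th a b c L1 L2}.
Arguments good_curve {R d Th a b L}.
Section MVTdir.
Variables (R : realType) (d : nat).

Lemma derive_dir {f : 'rV[R]_d -> R} (hf : forall q, differentiable f q) (z w : 'rV[R]_d) (t : R) :
  is_derive t 1 (fun s : R => f (z + s *: w)) ('D_w f (z + t *: w)).
Proof.
have E : (fun h : R => h^-1 *: (((fun s : R => f (z + s *: w)) \o shift t) (h *: 1)
             - f (z + t *: w))) =
         (fun h : R => h^-1 *: ((f \o shift (z + t *: w)) (h *: w) - f (z + t *: w))).
  apply/funext => h /=; congr (_ *: (f _ - _)).
  by rewrite /shift /= [h%:A]mulr1 scalerDl addrCA.
split.
- by rewrite /derivable E; apply: diff_derivable.
- by rewrite /derive E.
Qed.

Lemma mvt_dir (f : 'rV[R]_d -> R) (hf : forall q, differentiable f q) (z w : 'rV[R]_d) (a b : R) :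
  a < b -> exists2 c, c \in `]a, b[ &
    f (z + b *: w) - f (z + a *: w) = 'D_w f (z + c *: w) * (b - a).
Proof.
move=> ab.
apply: (@MVT R (fun s => f (z + s *: w)) (fun s => 'D_w f (z + s *: w))) => //.
- by move=> x _; apply: derive_dir.
- apply: derivable_within_continuous => x _.
  by have [] := derive_dir hf z w x.
Qed.

End MVTdir.
Section Line.
Variables (R : realType) (d : nat) (Th : set 'rV[R]_d).
Local Notation en := (@eucl_norm R d).

Lemma seg_param (z w : 'rV[R]_d) (al be tau : R) :
  (z + al *: w) + tau *: ((z + be *: w) - (z + al *: w)) =
  z + (al + tau * (be - al)) *: w.
Proof.
by rewrite opprD addrACA subrr add0r -scalerBl scalerA -addrA -scalerDl.
Qed.

Lemma seg_len (z w : 'rV[R]_d) (al be : R) : al <= be ->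
  en ((z + be *: w) - (z + al *: w)) = (be - al) * en w.
Proof.
move=> ab; rewrite opprD addrACA subrr add0r -scalerBl en_scale.
by rewrite ger0_norm // subr_ge0.
Qed.

Lemma good_line_gen (z w : 'rV[R]_d) (al be L : R) :
  al <= be -> 0 < L -> (be - al) * en w <= L ->
  (forall c1 c2, al <= c1 <= be -> al <= c2 <= be ->
     Th (z + c1 *: w) -> Th (z + c2 *: w) -> c1 = c2) ->
  good Th (z + al *: w) (z + be *: w) L.
Proof.
move=> ab L0 hL H; apply: good_seg => //; first by rewrite seg_len.
move=> z1 z2 [[t1 t1i <-] T1] [[t2 t2i <-] T2].
move: t1i t2i T1 T2; rewrite /= !in_itv /= => /andP[t10 t11] /andP[t20 t21].
rewrite !seg_param => T1 T2.
have h1 : al <= al + t1 * (be - al) <= be.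
  apply/andP; split; first by rewrite lerDl mulr_ge0 // subr_ge0.
  by rewrite -lerBrDl ler_piMl // subr_ge0.
have h2 : al <= al + t2 * (be - al) <= be.
  apply/andP; split; first by rewrite lerDl mulr_ge0 // subr_ge0.
  by rewrite -lerBrDl ler_piMl // subr_ge0.
by rewrite (H _ _ h1 h2 T1 T2).
Qed.

Lemma good_rev a b L : good Th a b L -> good Th b a L.
Proof.
move=> [L0 [g [g0 g1 gl gf]]]; split => //.
exists (fun t => g (1 - t)); split.
- by rewrite subr0.
- by rewrite subrr.
- move=> s t st; rewrite en_sub_sym.
  have -> : t - s = (1 - s) - (1 - t) by ring.
  by apply: gl; rewrite lerD2l lerN2.
- apply: sub_finite_set gf => z [[t ti <-] Tz]; split => //.
  exists (1 - t) => //.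
  move: ti; rewrite /= !in_itv /= => /andP[t0 t1].
  by rewrite subr_ge0 t1 /= lerBlDr lerDl.
Qed.

End Line.
Arguments mvt_dir {R d f}.
Arguments good_rev {R d Th a b L}.
Arguments good_line_gen {R d Th}.

Section Helpers.
Variables (R : realType) (d : nat).
Local Notation en := (@eucl_norm R d).

Lemma near_en (p : 'rV[R]_d) (P : 'rV[R]_d -> Prop) :
  (\forall z \near p, P z) -> exists2 rho, 0 < rho & forall z, en (z - p) < rho -> P z.
Proof.
move/nbhs_normP => [e /= e0 H]; exists e => // z hz; apply: H.
by rewrite /ball_ /= distrC; apply: le_lt_trans (norm_le_en _) hz.
Qed.

Lemma small_lt (X K rho : R) : 0 <= X -> 0 <= K -> X < rho / (K + 1) -> X * K < rho.
Proof.
move=> X0 K0 h.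
have K1 : 0 < K + 1 by rewrite ltr_wpDl.
apply: le_lt_trans (_ : X * K <= X * (K + 1)) _; first by rewrite ler_wpM2l // lerDl.
by rewrite -ltr_pdivlMr.
Qed.

Variables (f : 'rV[R]_d -> R) (hf : forall q, differentiable f q).

Lemma mvt_ub (z w : 'rV[R]_d) (a b K : R) : a <= b ->
  (forall c, a <= c <= b -> `|'D_w f (z + c *: w)| <= K) ->
  `|f (z + b *: w) - f (z + a *: w)| <= K * (b - a).
Proof.
rewrite le_eqVlt => /orP[/eqP -> _|ab H]; first by rewrite !subrr normr0 mulr0.
have [c /[!in_itv] /= /andP[ac cb] ->] := mvt_dir hf z w a b ab.
rewrite normrM (@ger0_norm _ (b - a)); last by rewrite subr_ge0 ltW.
apply: ler_wpM2r; first by rewrite subr_ge0 ltW.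
by apply: H; rewrite !ltW.
Qed.

Lemma mvt_lb (z w : 'rV[R]_d) (a b K : R) : a <= b ->
  (forall c, a <= c <= b -> K <= `|'D_w f (z + c *: w)|) ->
  K * (b - a) <= `|f (z + b *: w) - f (z + a *: w)|.
Proof.
rewrite le_eqVlt => /orP[/eqP -> _|ab H]; first by rewrite !subrr normr0 mulr0.
have [c /[!in_itv] /= /andP[ac cb] ->] := mvt_dir hf z w a b ab.
rewrite normrM (@ger0_norm _ (b - a)); last by rewrite subr_ge0 ltW.
apply: ler_wpM2r; first by rewrite subr_ge0 ltW.
by apply: H; rewrite !ltW.
Qed.

Lemma inj_line (z w : 'rV[R]_d) (a b : R) :
  (forall c, a <= c <= b -> 'D_w f (z + c *: w) != 0) ->
  forall c1 c2, a <= c1 <= b -> a <= c2 <= b ->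
    f (z + c1 *: w) = f (z + c2 *: w) -> c1 = c2.
Proof.
move=> H.
have key : forall c1 c2, a <= c1 <= b -> a <= c2 <= b -> c1 < c2 ->
    f (z + c1 *: w) != f (z + c2 *: w).
  move=> c1 c2 /andP[ac1 c1b] /andP[ac2 c2b] c12.
  have [c /[!in_itv] /= /andP[c1c cc2] E] := mvt_dir hf z w c1 c2 c12.
  rewrite eq_sym -subr_eq0 E mulf_neq0 //; last by rewrite subr_eq0 gt_eqF.
  apply: H; rewrite (le_trans ac1 (ltW c1c)) /=.
  exact: le_trans (ltW cc2) c2b.
move=> c1 c2 h1 h2 E.
case: (ltgtP c1 c2) => // c12.
- by move: (key _ _ h1 h2 c12); rewrite E eqxx.
- by move: (key _ _ h2 h1 c12); rewrite E eqxx.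
Qed.

End Helpers.
Arguments mvt_ub {R d f}. Arguments mvt_lb {R d f}. Arguments inj_line {R d f}.
Arguments near_en {R d p P}.

Section Local.
Variables (R : realType) (d : nat) (Th : set 'rV[R]_d) (x u : 'rV[R]_d) (del : R).
Hypothesis del0 : 0 < del.
Hypothesis Hclosed : forall p, ~ Th p ->
  exists2 rho, 0 < rho & forall z, eucl_norm (z - p) < rho -> ~ Th z.
Hypothesis Hchart : forall p, Th p -> exists (U : set 'rV[R]_d) (f : 'rV[R]_d -> R),
  [/\ open U, U p, (forall q, differentiable f q), (forall w, continuous ('D_w f)) &
      ((exists v, 'D_v f p != 0) /\ Th `&` U = [set z | U z /\ f z = 0])].
Local Notation en := (@eucl_norm R d).
Local Notation Lp t := (x + t *: u).

Lemma en_pt (t t0 sig : R) (v : 'rV[R]_d) :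
  en (Lp t + sig *: v - Lp t0) <= `|t - t0| * en u + `|sig| * en v.
Proof.
have -> : Lp t + sig *: v - Lp t0 = (t - t0) *: u + sig *: v.
  by rewrite scalerBl; rewrite opprD; rewrite addrAC addrACA subrr add0r.
by apply: le_trans (en_triangle _ _) _; rewrite !en_scale.
Qed.

Lemma dist_t (a b t t0 : R) : a <= t0 -> t0 <= b -> a <= t <= b -> `|t - t0| <= b - a.
Proof. by move=> h1 h2 /andP[h3 h4]; rewrite ler_norml; apply/andP; split; lra. Qed.

Lemma le_refl_s (s : R) : 0 < s -> 0 <= s <= s.
Proof. by move=> s0; rewrite lexx ltW. Qed.
Lemma ab_in (a b : R) : a <= b -> a <= a <= b.
Proof. by move=> ab; rewrite lexx. Qed.
Lemma ab_in' (a b : R) : a <= b -> a <= b <= b.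
Proof. by move=> ab; rewrite lexx andbT. Qed.

Lemma local (t0 : R) : exists2 r, 0 < r & forall a b, a <= t0 -> t0 <= b -> b - a < r ->
  forall k, 0 < k -> good Th (Lp a) (Lp b) ((b - a) * (en u + del) + k).
Proof.
have enu0 := en_ge0 u.
have pos : forall a b k, a <= t0 -> t0 <= b -> 0 < k -> 0 < (b - a) * (en u + del) + k.
  move=> a b k h1 h2 k0; apply: ltr_wpDl => //; apply: mulr_ge0; first lra.
  by apply: addr_ge0 => //; apply: ltW.
case: (pselect (Th (Lp t0))) => [Tp|nTp]; last first.
  have [rho rho0 Hr] := Hclosed _ nTp.
  exists (rho / (en u + 1)); first by rewrite divr_gt0 // ltr_wpDl.
  move=> a b at0 t0b ba k k0.
  have ab : a <= b by apply: le_trans t0b.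
  apply: good_line_gen => //; first exact: pos.
  - have h0 : 0 <= b - a by lra.
    have := ltW del0; have := ltW k0; nra.
  - move=> c1 c2 h1 h2 T1; exfalso; apply: (Hr _ _ T1).
    have := en_pt c1 t0 0 u; rewrite scale0r addr0 normr0 mul0r addr0 => h.
    apply: le_lt_trans h _.
    apply: le_lt_trans (_ : (b - a) * en u < rho).
      by apply: ler_wpM2r => //; apply: dist_t.
    by apply: small_lt => //; rewrite subr_ge0.
have [U [f [oU Up hf hc [[v hv] hTU]]]] := Hchart _ Tp.
have nbU : \forall z \near Lp t0, U z by apply: open_nbhs_nbhs.
have f0 : forall z, U z -> Th z -> f z = 0.
  by move=> z Uz Tz; have : (Th `&` U) z by []; rewrite hTU => -[].
have fp0 : f (Lp t0) = 0 by apply: f0.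
have nearD : forall w e, 0 < e ->
    \forall z \near Lp t0, `|'D_w f (Lp t0) - 'D_w f z| < e.
  by move=> w e e0; exact: (@cvgr_dist_lt _ _ _ _ _ ('D_w f) _ (hc w (Lp t0)) e e0).
case: (eqVneq ('D_u f (Lp t0)) 0) => [Du0|Du0]; last first.
  have H : \forall z \near Lp t0, U z /\ 'D_u f z != 0.
    near=> z; split; first by near: z.
    apply/eqP => hz.
    have : `|'D_u f (Lp t0) - 'D_u f z| < `|'D_u f (Lp t0)|.
      by near: z; apply: nearD; rewrite normr_gt0.
    by rewrite hz subr0 ltxx.
  have [rho rho0 Hr] := near_en H.
  exists (rho / (en u + 1)); first by rewrite divr_gt0 // ltr_wpDl.
  move=> a b at0 t0b ba k k0.
  have ab : a <= b by apply: le_trans t0b.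
  have inb : forall c, a <= c <= b -> U (Lp c) /\ 'D_u f (Lp c) != 0.
    move=> c hc'; apply: Hr.
    have := en_pt c t0 0 u; rewrite scale0r addr0 normr0 mul0r addr0 => h.
    apply: le_lt_trans h _.
    apply: le_lt_trans (_ : (b - a) * en u < rho).
      by apply: ler_wpM2r => //; apply: dist_t.
    by apply: small_lt => //; rewrite subr_ge0.
  apply: good_line_gen => //; first exact: pos.
  - have h0 : 0 <= b - a by lra.
    have := ltW del0; have := ltW k0; nra.
  - move=> c1 c2 h1 h2 T1 T2.
    apply: (inj_line hf x u a b) => //; first by move=> c /inb [].
    by rewrite !f0 //; [case: (inb _ h2) | case: (inb _ h1)].

set Dv := 'D_v f (Lp t0).
have Dv0 : 0 < `|Dv| by rewrite normr_gt0.
set m := `|Dv| / 2.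
have m0 : 0 < m by rewrite divr_gt0.
have env0 := en_ge0 v.
set eps := del / (4 * (en v + 1)).
have eps0 : 0 < eps by rewrite divr_gt0 // mulr_gt0 // ltr_wpDl.
have H : \forall z \near Lp t0, [/\ U z, m <= `|'D_v f z| & `|'D_u f z| <= eps * m].
  near=> z; split; first by near: z.
  - have h : `|Dv - 'D_v f z| < m by near: z; apply: nearD.
    have h2 : `|Dv| <= `|Dv - 'D_v f z| + `|'D_v f z|.
      by rewrite -[X in `|X| <= _](subrK ('D_v f z)) ler_normD.
    rewrite /m in h *; lra.
  - have h : `|'D_u f (Lp t0) - 'D_u f z| < eps * m.
      by near: z; apply: nearD; rewrite mulr_gt0.
    by move: h; rewrite Du0 sub0r normrN => /ltW.
have [rho rho0 Hr] := near_en H.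
set K := en u + 2 * eps * en v.
have K0 : 0 <= K by rewrite addr_ge0 // mulr_ge0 // mulr_ge0 // ltW.
exists (rho / (K + 1)); first by rewrite divr_gt0 // ltr_wpDl.
move=> a b at0 t0b ba k k0.
have ab : a <= b by apply: le_trans t0b.
case: (eqVneq a b) => [eab|neab].
  subst b; apply: good_refl; exact: pos.
have ltab : a < b by rewrite lt_neqAle neab.
have k3 : 0 < k / 3 by rewrite divr_gt0.
set s := 2 * eps * (b - a).
have s0 : 0 < s by apply: mulr_gt0; [apply: mulr_gt0 | rewrite subr_gt0].
have inb : forall t sig, a <= t <= b -> 0 <= sig <= s ->
    [/\ U (Lp t + sig *: v), m <= `|'D_v f (Lp t + sig *: v)| &
        `|'D_u f (Lp t + sig *: v)| <= eps * m].
  move=> t sig ht /andP[hs1 hs2]; apply: Hr.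
  apply: le_lt_trans (en_pt _ _ _ _) _.
  apply: le_lt_trans (_ : (b - a) * K < rho); last first.
    by apply: small_lt => //; rewrite subr_ge0.
  rewrite /K mulrDr; apply: lerD.
    by apply: ler_wpM2r => //; apply: dist_t.
  rewrite ger0_norm // (_ : (b - a) * (2 * eps * en v) = s * en v); last first.
    by rewrite /s; ring.
  by apply: ler_wpM2r.
have inb0 : forall t, a <= t <= b ->
    [/\ U (Lp t), m <= `|'D_v f (Lp t)| & `|'D_u f (Lp t)| <= eps * m].
  move=> t ht; have := inb t 0 ht; rewrite scale0r addr0; apply.
  by rewrite lexx ltW.
have leg : forall t, a <= t <= b -> good Th (Lp t) (Lp t + s *: v) (s * en v + k / 3).
  move=> t ht.
  have := @good_line_gen R d Th (Lp t) v 0 s (s * en v + k / 3).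
  rewrite scale0r addr0; apply => //.
  - exact: ltW.
  - by apply: ltr_wpDl => //; rewrite mulr_ge0 // ltW.
  - by rewrite subr0 lerDl ltW.
  - move=> c1 c2 h1 h2 T1 T2.
    apply: (inj_line hf (Lp t) v 0 s) => //.
      move=> c hc'; have [_ hm _] := inb t c ht hc'.
      by rewrite -normr_gt0; apply: lt_le_trans hm.
    have [U1 _ _] := inb t c1 ht h1; have [U2 _ _] := inb t c2 ht h2.
    by rewrite !f0.
have mid : good Th (Lp a + s *: v) (Lp b + s *: v) ((b - a) * en u + k / 3).
  rewrite ![Lp _ + s *: v]addrAC.
  apply: good_line_gen => //.
  - by apply: ltr_wpDl => //; rewrite mulr_ge0 // subr_ge0.
  - by rewrite lerDl ltW.
  - move=> c1 c2 h1 h2 T1 _; exfalso.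
    have [U1 _ _] := inb c1 s h1 (le_refl_s _ s0).
    move: T1; rewrite addrAC => T1.
    have := f0 _ U1 T1; apply/eqP.
    rewrite -normr_gt0.
    have lb : m * (s - 0) <= `|f (Lp c1 + s *: v) - f (Lp c1 + 0 *: v)|.
      apply: (mvt_lb hf (Lp c1) v 0 s m); first exact: ltW.
      by move=> c hc'; have [_ hm _] := inb c1 c h1 hc'.
    have ub : `|f (Lp c1) - f (Lp t0)| <= eps * m * (b - a).
      have [ct|tc] := leP c1 t0.
      + rewrite distrC.
        apply: le_trans (mvt_ub hf x u c1 t0 (eps * m) ct _) _.
          move=> c /andP[hc1 hc2].
          have hcc : a <= c <= b.
            by case/andP: h1 => h1a h1b; rewrite (le_trans h1a hc1) (le_trans hc2 t0b).
          by have [_ _ hm] := inb0 c hcc.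
        by apply: ler_wpM2l; [rewrite mulr_ge0 ?ltW | case/andP: h1 => ? ?; lra].
      + apply: le_trans (mvt_ub hf x u t0 c1 (eps * m) (ltW tc) _) _.
          move=> c /andP[hc1 hc2].
          have hcc : a <= c <= b.
            by case/andP: h1 => h1a h1b; rewrite (le_trans at0 hc1) (le_trans hc2 h1b).
          by have [_ _ hm] := inb0 c hcc.
        by apply: ler_wpM2l; [rewrite mulr_ge0 ?ltW | case/andP: h1 => ? ?; lra].
    move: lb ub; rewrite scale0r addr0 subr0 fp0 subr0 => lb ub.
    have tri : `|f (Lp c1 + s *: v) - f (Lp c1)| <= `|f (Lp c1 + s *: v)| + `|f (Lp c1)|.
      by rewrite -(normrN (f (Lp c1))) ler_normD.
    have : eps * m * (b - a) < m * s.
      have hp : 0 < eps * m * (b - a) by apply: mulr_gt0; [apply: mulr_gt0 | rewrite subr_gt0].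
      rewrite /s; nra.
    lra.
have L1 := leg a (ab_in _ _ ab).
have L3 := good_rev (leg b (ab_in' _ _ ab)).
apply: good_mono (good_cat (good_cat L1 mid) L3) _.
have e4 : 2 * (s * en v) <= (b - a) * del.
  rewrite /s /eps.
  have -> : 2 * (2 * (del / (4 * (en v + 1))) * (b - a) * en v) =
            (b - a) * del * (en v / (en v + 1)).
    by field; rewrite gt_eqF // ltr_wpDl.
  apply: ler_piMr; first by apply: mulr_ge0; [rewrite subr_ge0 | exact: ltW].
  by rewrite ler_pdivrMr ?ltr_wpDl // mul1r lerDl.
lra.
Unshelve. all: by end_near.
Qed.

Lemma global (k : R) : 0 < k ->
  good Th (Lp 0) (Lp 1) (1 * (en u + del) + k).
Proof.
move=> k0.
set c := en u + del.
have c0 : 0 < c by rewrite /c ltr_wpDl ?en_ge0.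
set S := [set s : R | (0 <= s <= 1) /\
  forall k, 0 < k -> good Th (Lp 0) (Lp s) (s * c + k)].
have S0 : S 0.
  split; first by rewrite lexx ler01.
  by move=> k' k0'; apply: good_refl; rewrite mul0r add0r.
have hS : has_sup S.
  split; first by exists 0.
  by exists 1 => s [/andP[_ ?] _].
set sg := sup S.
have sg0 : 0 <= sg by apply: sup_upper_bound.
have sg1 : sg <= 1 by apply: ge_sup; [exists 0 | move=> s [/andP[_ ?] _]].
have [r r0 Hr] := local sg.
have Ssg : S sg.
  have [e [/andP[e0 e1] He] lte] := sup_adherent (divr_gt0 r0 (ltr0n _ 2)) hS.
  have esg : e <= sg by apply: sup_upper_bound => //; split => //; apply/andP.
  split; first by rewrite sg0 sg1.
  move=> k' k0'.
  have g1 := He (k' / 2) (divr_gt0 k0' (ltr0n _ 2)).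
  have g2 := Hr e sg esg (lexx _) (ltac:(rewrite /sg in lte *; lra)) (k' / 2)
    (divr_gt0 k0' (ltr0n _ 2)).
  apply: good_mono (good_cat g1 g2) _.
  rewrite -/c le_eqVlt; apply/orP; left; apply/eqP; by field.
have [sglt|sgge] := ltrP sg 1; last first.
  have E : sg = 1 by apply/eqP; rewrite eq_le sg1 sgge.
  by case: Ssg => _ /(_ k k0); rewrite E.
exfalso.
set b := Num.min 1 (sg + r / 2).
have bgt : sg < b by rewrite /b lt_min sglt ltrDl divr_gt0.
have Sb : S b.
  split.
    by rewrite /b ge_min lexx /= le_min ler01 /= addr_ge0 // ltW // divr_gt0.
  move=> k' k0'.
  have g1 := (proj2 Ssg) (k' / 2) (divr_gt0 k0' (ltr0n _ 2)).
  have bb : b <= sg + r / 2 by rewrite /b ge_min lexx orbT.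
  have bsr : b - sg < r by lra.
  have g2 := Hr sg b (lexx _) (ltW bgt) bsr (k' / 2) (divr_gt0 k0' (ltr0n _ 2)).
  apply: good_mono (good_cat g1 g2) _.
  rewrite -/c le_eqVlt; apply/orP; left; apply/eqP; by field.
have := sup_upper_bound hS Sb; rewrite -/sg => h.
by move: (lt_le_trans bgt h); rewrite ltxx.
Qed.

End Local.

Theorem lemma3p13 (R : realType) (d : nat) (Theta : set 'rV[R]_d) :
  Ck_hypersurface 3 Theta ->
  (exists eps0 : R, 0 < eps0 /\
     forall x : 'rV[R]_d, (dist_to x Theta < eps0%:E)%E ->
       exists! p, Theta p /\ (eucl_norm (x - p))%:E = dist_to x Theta) ->
  forall (x y : 'rV[R]_d) (eta : R), 0 < eta ->
    exists gamma : R -> 'rV[R]_d,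
      [/\ {within `[0, 1], continuous gamma}, gamma 0 = x, gamma 1 = y,
          (curve_length gamma < (eucl_norm (x - y) + eta)%:E)%E &
          finite_set ([set gamma t | t in `[0, 1]] `&` Theta)].
Proof.
move=> HC [eps0 [eps00 Huniq]] x y eta eta0.
have Hclosed : forall p, ~ Theta p ->
    exists2 rho, 0 < rho & forall z, eucl_norm (z - p) < rho -> ~ Theta z.
  move=> p nTp.
  case: (pselect (exists2 rho, 0 < rho & forall z, eucl_norm (z - p) < rho -> ~ Theta z))
    => // nH; exfalso.
  have H : forall rho, 0 < rho -> exists z, Theta z /\ eucl_norm (p - z) < rho.
    move=> rho rho0; apply: contrapT => hn; apply: nH; exists rho => // z hz Tz.
    by apply: hn; exists z; rewrite en_sub_sym.
  have dle : forall e, 0 < e -> (dist_to p Theta <= e%:E)%E.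
    move=> e e0; have [z [Tz hz]] := H e e0.
    apply: le_trans (ereal_inf_lbound _) _; first by exists z.
    by rewrite lee_fin ltW.
  have dlt : (dist_to p Theta < eps0%:E)%E.
    apply: le_lt_trans (dle (eps0 / 2) _) _; first by rewrite divr_gt0.
    by rewrite lte_fin ltr_pdivrMr // ltr_pMr // ltr1n.
  have [q [[Tq Eq] _]] := Huniq p dlt.
  have hq : forall e, 0 < e -> eucl_norm (p - q) <= e.
    by move=> e e0; rewrite -lee_fin Eq; apply: dle.
  have q0 : eucl_norm (p - q) = 0.
    apply/eqP; rewrite eq_le en_ge0 andbT; apply/negPn/negP; rewrite -ltNge => hpos.
    have := hq _ (divr_gt0 hpos (ltr0n _ 2)).
    rewrite ler_pdivlMr // => h2; lra.
  have /eqP := en0_eq _ q0; rewrite subr_eq0 => /eqP epq.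
  by apply: nTp; rewrite epq.
have Hchart : forall p, Theta p -> exists (U : set 'rV[R]_d) (f : 'rV[R]_d -> R),
  [/\ open U, U p, (forall q, differentiable f q), (forall w, continuous ('D_w f)) &
      ((exists v, 'D_v f p != 0) /\ Theta `&` U = [set z | U z /\ f z = 0])].
  move=> p Tp; have [U [f [oU Up [hf hD] hv hTU]]] := HC p Tp.
  exists U, f; split => // w q.
  apply: differentiable_continuous.
  by have [h _] := hD w; apply: h.
have del0 : 0 < eta / 4 by rewrite divr_gt0.
have k0 : 0 < eta / 2 by rewrite divr_gt0.
have G := @global R d Theta x (y - x) (eta / 4) del0 Hclosed Hchart (eta / 2) k0.
rewrite scale0r addr0 scale1r addrC subrK in G.
have [g [gc g0 g1 gl gf]] := good_curve G.
exists g; split => //.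
apply: le_lt_trans gl _.
rewrite lte_fin en_sub_sym mul1r; lra.
Qed.
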